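(* Let $n\ge 3$, let $a_0,\ldots,a_{n-1}$ be indeterminates over $\mathbb{Q}$, $f=x^n+a_{n-1}x^{n-1}+\cdots+a_0$, and \[f_1(x,y)=\frac{f(y)-f(x)}{y-x},\qquad f_3(x,y)=\frac{f(y)-2f\left(\frac{x+y}{2}\right)+f(x)}{\frac{(y-x)^2}{2}}.\] Let $D_2\in\mathbb{Q}[a_0,\ldots,a_{n-1}]$ be the polynomial obtained by expressing $\prod_{1\le i,j,k\le n,\ i<j,\ j\ne k,\ k\ne i}(2r_k-r_i-r_j)$ ($r_1,\ldots,r_n$ the roots of $f$) in terms of $a_0,\ldots,a_{n-1}$ via Vieta's formulas. Then, in the polynomial ring $\mathbb{Q}[a_0,\ldots,a_{n-1},x,y]$, \[D_2\in\langle f(x),f_1(x,y),f_3(x,y)\rangle\cap\mathbb{Q}[a_0,\ldots,a_{n-1}].\]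
   Context: $\langle g_1,\ldots,g_m\rangle$ denotes the ideal generated by $g_1,\ldots,g_m$. *)

(* Defs.v *)
From HB Require Import structures.
From mathcomp Require Import all_boot all_order all_algebra.
From mathcomp Require Export mpoly.
Set Implicit Arguments. Unset Strict Implicit. Unset Printing Implicit Defensive.
Import Order.TTheory GRing.Theory Num.Theory.
Local Open Scope ring_scope.

(* The ambient ring Q[a_0,...,a_{n-1},x,y] is {mpoly rat[n.+2]}:
   variable i < n is a_i, variable n is x, variable n+1 is y. *)
Definition avar (n : nat) (i : 'I_n) : {mpoly rat[n.+2]} := 'X_(inord i).
Definition xvar (n : nat) : {mpoly rat[n.+2]} := 'X_(inord n).
Definition yvar (n : nat) : {mpoly rat[n.+2]} := 'X_(inord n.+1).

Definition avars (n : nat) : n.-tuple {mpoly rat[n.+2]} := [tuple avar i | i < n].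

Definition fgen (n : nat) (t : {mpoly rat[n.+2]}) : {mpoly rat[n.+2]} :=
  t ^+ n + \sum_(i < n) avar i * t ^+ i.

(* f1 is the quotient (f(y)-f(x))/(y-x) in the (integral domain) big ring. *)
Definition is_f1 (n : nat) (g : {mpoly rat[n.+2]}) : Prop :=
  (yvar n - xvar n) * g = fgen (yvar n) - fgen (xvar n).

Definition is_f3 (n : nat) (g : {mpoly rat[n.+2]}) : Prop :=
  ((2%:R : rat)^-1 *: (yvar n - xvar n) ^+ 2) * g =
  fgen (yvar n) - 2%:R * fgen ((2%:R : rat)^-1 *: (xvar n + yvar n)) + fgen (xvar n).

Definition vieta (n : nat) : n.-tuple {mpoly rat[n]} :=
  [tuple ((-1) ^+ (n - i)%N *: mesym n rat (n - i)%N) | i < n].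

Definition root_prod (n : nat) : {mpoly rat[n]} :=
  \prod_(i < n) \prod_(j < n | (i < j)%N)
     \prod_(k < n | (k != i) && (k != j)) (2%:R * 'X_k - 'X_i - 'X_j).

Definition is_D2 (n : nat) (D : {mpoly rat[n]}) : Prop :=
  D \mPo vieta n = root_prod n.

Definition in_ideal3 (k : nat) (g1 g2 g3 p : {mpoly rat[k]}) : Prop :=
  exists c1 c2 c3 : {mpoly rat[k]}, p = c1 * g1 + c2 * g2 + c3 * g3.

Definition in_coeff_ring (n : nat) (p : {mpoly rat[n.+2]}) : Prop :=
  exists q : {mpoly rat[n]}, p = q \mPo avars n.

(* Main.v *)
Require Import Defs.
From HB Require Import structures.
From mathcomp Require Import all_boot all_order all_algebra.
From mathcomp Require Import fingroup perm mpoly ring.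
Set Implicit Arguments. Unset Strict Implicit. Unset Printing Implicit Defensive.
Import Order.TTheory GRing.Theory Num.Theory.
Local Open Scope ring_scope.
Lemma size_map_poly_le (aR rR : nzRingType) (f : aR -> rR) (p : {poly aR}) :
  (size (map_poly f p) <= size p)%N.
Proof. by rewrite /map_poly; apply: size_poly. Qed.

Lemma size_ie n : size (index_enum 'I_n) = n.
Proof. by rewrite -[index_enum _]enumT size_enum_ord. Qed.

Section Core.
Variable R : idomainType.
Variables (n : nat) (r : 'I_n -> R).
Hypothesis r_inj : injective r.

Local Notation B := {poly {poly R}}.

Definition ev2 (a b : R) : {rmorphism B -> R} :=
  horner_eval b \o map_poly (horner_eval a).

Lemma ev2E a b (P : B) : ev2 a b P = (map_poly (horner_eval a) P).[b].
Proof. by []. Qed.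
Lemma ev2X a b : ev2 a b 'X = b.
Proof. by rewrite ev2E map_polyX hornerX. Qed.
Lemma ev2x a b : ev2 a b ('X%:P) = a.
Proof. rewrite ev2E map_polyC hornerC; exact: hornerX. Qed.
Lemma ev2C a b c : ev2 a b (c%:P%:P) = c.
Proof. rewrite ev2E map_polyC hornerC; exact: hornerC. Qed.

Definition FP : {poly R} := \prod_(i < n) ('X - (r i)%:P).

Definition FB (t : B) : B := FP^:P \Po t.

Lemma ev2FB a b t : ev2 a b (FB t) = FP.[ev2 a b t].
Proof.
rewrite /FB /comp_poly -map_poly_comp -horner_map /= -map_poly_comp /=.
congr (_.[_]); apply: map_poly_id => c _ /=; exact: ev2C.
Qed.

Lemma FP_root i : FP.[r i] = 0.
Proof.
rewrite /FP horner_prod (bigD1 i) //= hornerXsubC subrr mul0r //.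
Qed.

Lemma FP_monic : FP \is monic.
Proof. by apply: monic_prod => i _; apply: monicXsubC. Qed.

Lemma size_FP : size FP = n.+1.
Proof. by rewrite /FP size_prod_XsubC; congr _.+1; apply: size_ie. Qed.

Lemma rootsFP (q : {poly R}) : (size q <= n)%N -> (forall i, q.[r i] = 0) -> q = 0.
Proof.
move=> sq hq; apply/eqP/negPn/negP => nq.
have := max_poly_roots nq (rs := [seq r i | i <- enum 'I_n]).
rewrite size_map size_enum_ord.
have -> : all (root q) [seq r i | i <- enum 'I_n].
  by apply/allP => x /mapP [i _ ->]; apply/rootP.
rewrite map_inj_uniq ?enum_uniq // => /(_ isT isT).
by rewrite ltnNge sq.
Qed.


Lemma FBX : FB 'X = FP^:P.
Proof. by rewrite /FB comp_polyXr. Qed.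

Lemma FBx : FB ('X%:P) = FP%:P.
Proof. rewrite /FB comp_polyCr; congr _%:P; exact: comp_polyXr. Qed.

Hypothesis n_gt0 : (0 < n)%N.
Variable F1 : B.
Hypothesis hF1 : ('X - 'X%:P) * F1 = FB 'X - FB ('X%:P).

Lemma F1_prop : F1 \is monic /\ size F1 = n.
Proof.
have sD : size (FP^:P - (FP%:P : B)) = n.+1.
  rewrite size_addl ?size_opp ?size_polyC ?size_map_polyC size_FP //.
  by apply: (leq_ltn_trans (leq_b1 _)).
have lD : lead_coef (FP^:P - (FP%:P : B)) = 1.
  rewrite lead_coefDl; last first.
    by rewrite size_opp size_map_polyC size_FP size_polyC; apply: (leq_ltn_trans (leq_b1 _)).
  rewrite lead_coef_map_inj //; last by move=> x y /polyC_inj.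
  by move/monicP: FP_monic => ->.
have nF1 : F1 != 0.
  apply/eqP=> F10; move: sD; rewrite -FBX -FBx -hF1 F10 mulr0 size_poly0.
  by [].
have nX : ('X - ('X : {poly R})%:P : B) != 0 by rewrite -size_poly_eq0 size_XsubC.
split.
  apply/monicP; move: lD; rewrite -FBX -FBx -hF1 lead_coefM lead_coefXsubC mul1r.
  by [].
move: sD; rewrite -FBX -FBx -hF1 size_mul // size_XsubC.
by case.
Qed.

Lemma ev2F1 i j : i != j -> ev2 (r i) (r j) F1 = 0.
Proof.
move=> nij.
have := congr1 (ev2 (r i) (r j)) hF1.
rewrite rmorphM !rmorphB ev2X ev2x !ev2FB ev2X ev2x !FP_root subrr.
move/eqP; rewrite mulf_eq0 => /orP [|/eqP //].
by rewrite subr_eq0 => /eqP /r_inj /eqP; rewrite eq_sym (negbTE nij).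
Qed.

Lemma lemmaA (P : B) :
  (forall i j, i != j -> ev2 (r i) (r j) P = 0) ->
  exists u v : B, P = u * (FP%:P) + v * F1.
Proof.
move=> hP.
have [mF1 sF1] := F1_prop.
have nF1 : F1 != 0 by rewrite -size_poly_eq0 sF1 -lt0n.
set q := Pdiv.CommonRing.rdivp P F1; set rho := Pdiv.CommonRing.rmodp P F1.
have ePq : P = q * F1 + rho := Pdiv.RingMonic.rdivp_eq mF1 P.
have srho : (size rho < n)%N by rewrite -sF1 Pdiv.CommonRing.ltn_rmodp.
have rho0 i : map_poly (horner_eval (r i)) rho = 0.
  apply/eqP/negPn/negP => np.
  have := max_poly_roots np (rs := [seq r j | j <- enum (predC1 i)]).
  rewrite size_map -cardE cardC1 card_ord.
  have -> : all (root (map_poly (horner_eval (r i)) rho)) [seq r j | j <- enum (predC1 i)].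
    apply/allP => x /mapP [j]; rewrite mem_enum /= => nji ->.
    apply/rootP; rewrite -ev2E.
    have nij : i != j by rewrite eq_sym.
    have := hP i j nij.
    rewrite {1}ePq rmorphD rmorphM ev2F1 // mulr0 add0r.
    by [].
  rewrite map_inj_uniq ?enum_uniq // => /(_ isT isT).
  have := leq_trans (size_map_poly_le _ _) (ltnW srho).
  move: srho; case: n n_gt0 => // n' _ /= ? ?.
  move=> H; have : (n' < n')%N.
    by apply: (leq_trans H); apply: (leq_trans (size_map_poly_le _ _)); rewrite -ltnS.
  by rewrite ltnn.
have coef0 b i : (rho`_b).[r i] = 0.
  by move: (rho0 i) => /polyP /(_ b); rewrite coef_map coef0.
have rhoE : rho = map_poly (fun c => Pdiv.CommonRing.rdivp c FP) rho * FP%:P.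
  apply/polyP => b; rewrite coefMC coef_map_id0 ?Pdiv.CommonRing.rdiv0p //.
  have e := Pdiv.RingMonic.rdivp_eq FP_monic (rho`_b).
  have r0 : Pdiv.CommonRing.rmodp (rho`_b) FP = 0.
    apply: rootsFP.
      by rewrite -ltnS -size_FP Pdiv.CommonRing.ltn_rmodp monic_neq0 // FP_monic.
    move=> i; have := congr1 (fun p => p.[r i]) e.
    by rewrite /= hornerD hornerM FP_root mulr0 add0r coef0.
  by rewrite {1}e r0 addr0.
exists (map_poly (fun c => Pdiv.CommonRing.rdivp c FP) rho), q.
by rewrite {1}ePq -rhoE addrC.
Qed.


Lemma ev2comp a b (p : {poly R}) (t : B) : ev2 a b (p^:P \Po t) = p.[ev2 a b t].
Proof.
rewrite /comp_poly -map_poly_comp -horner_map.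
congr (_.[_]); rewrite -map_poly_comp; apply: map_poly_id => c _ /=; exact: ev2C.
Qed.

Variable h : R.
Hypothesis h2 : h * 2%:R = 1.
Variable F3 : B.
Hypothesis hF3 : (h%:P%:P * ('X - 'X%:P) ^+ 2) * F3 =
  FB 'X - 2%:R * FB (h%:P%:P * ('X%:P + 'X)) + FB ('X%:P).

Definition e (i j : 'I_n) : R :=
  \prod_(k < n | (k != i) && (k != j)) (h * (r i + r j) - r k).

Lemma eS i j : e i j = e j i.
Proof.
rewrite /e (addrC (r i)); apply: eq_bigl => k; exact: andbC.
Qed.

Lemma h_neq0 : h != 0.
Proof. by apply/eqP => h0; move: h2; rewrite h0 mul0r => /eqP; rewrite eq_sym oner_eq0. Qed.

Lemma ev2F3 i j : i != j -> ev2 (r i) (r j) F3 = e i j.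
Proof.
move=> nij.
have := congr1 (ev2 (r i) (r j)) hF3.
rewrite (rmorphM _ (_ * _) F3) (rmorphM _ _ (_ ^+ 2)) rmorphXn rmorphB ev2X ev2x ev2C.
rewrite !rmorphD rmorphN rmorphM rmorph_nat !ev2FB rmorphM rmorphD ev2X ev2x ev2C !FP_root.
have -> : FP.[h * (r i + r j)] = (h * (r i + r j) - r i) * ((h * (r i + r j) - r j) * e i j).
  rewrite /FP horner_prod (bigD1 i) //= (bigD1 j) /=; last by rewrite eq_sym.
  rewrite !hornerE; f_equal.
  by apply: eq_bigr => k _; rewrite !hornerE.
have key : 0 - 2%:R * ((h * (r i + r j) - r i) * ((h * (r i + r j) - r j) * e i j)) + 0
    = (h * (r j - r i) ^+ 2) * e i j.
  have -> : 0 - 2%:R * ((h * (r i + r j) - r i) * ((h * (r i + r j) - r j) * e i j)) + 0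
    = (-2%:R * (h * (r i + r j) - r i) * (h * (r i + r j) - r j)) * e i j by ring.
  congr (_ * _).
  have -> : -2%:R * (h * (r i + r j) - r i) * (h * (r i + r j) - r j) =
    h * (r j - r i) ^+ 2 + (h * 2%:R - 1) * (2%:R * r i * r j - h * (r i + r j) ^+ 2) by ring.
  by rewrite h2 subrr mul0r addr0.
rewrite key; apply: mulfI.
rewrite mulf_neq0 ?h_neq0 // expf_neq0 // subr_eq0.
by apply/eqP => /r_inj /eqP; rewrite eq_sym (negbTE nij).
Qed.

Definition Pi : {poly R} := \prod_(i < n) \prod_(j < n | (i < j)%N) ('X - (e i j)%:P).

Lemma Pi_root i j : i != j -> Pi.[e i j] = 0.
Proof.
move=> nij.
have [a [b [ab eab]]] : exists a b : 'I_n, (a < b)%N /\ e i j = e a b.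
  case: (ltngtP i j) => [lij|lji|eij].
  - by exists i, j.
  - by exists j, i; rewrite eS.
  - by move: nij; rewrite -val_eqE /= eij eqxx.
rewrite /Pi horner_prod (bigD1 a) //= horner_prod (bigD1 b) //= hornerXsubC eab subrr.
by rewrite !mul0r.
Qed.

Definition Dr : R :=
  \prod_(i < n) \prod_(j < n | (i < j)%N) \prod_(k < n | (k != i) && (k != j))
     (2%:R * r k - r i - r j).

Lemma Dr_Pi : exists c : R, Dr = c * Pi.[0].
Proof.
exists (\prod_(i < n) \prod_(j < n | (i < j)%N) ((\prod_(k < n | (k != i) && (k != j)) (-2%:R)) * (-1))).
rewrite /Pi horner_prod -big_split /=; apply: eq_bigr => i _.
rewrite horner_prod -big_split /=; apply: eq_bigr => j _.
rewrite hornerXsubC /e -mulrA (_ : -1 * (0 - _) = \prod_(k < n | (k != i) && (k != j)) (h * (r i + r j) - r k)); last by ring.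
rewrite -big_split /=; apply: eq_bigr => k _.
have -> : 2%:R * r k - r i - r j = -2%:R * (h * (r i + r j) - r k) + (h * 2%:R - 1) * (r i + r j) by ring.
by rewrite h2 subrr mul0r addr0.
Qed.

Theorem core_cert : exists c1 c2 c3 : B, (Dr%:P%:P : B) = c1 * FP%:P + c2 * F1 + c3 * F3.
Proof.
have [u [v Huv]] : exists u v : B, Pi^:P \Po F3 = u * FP%:P + v * F1.
  apply: lemmaA => i j nij.
  by rewrite ev2comp ev2F3 // Pi_root.
have [q Hq] : exists q : {poly R}, Pi - (Pi.[0])%:P = q * ('X - 0%:P).
  apply/factor_theorem; apply/rootP; rewrite !hornerE; exact: subrr.
have HPi : Pi = (Pi.[0])%:P + q * 'X.
  set c0 := Pi.[0]; move: Hq; rewrite polyC0 subr0 => Hq.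
  by rewrite -Hq addrC subrK.
have eH : Pi^:P \Po F3 = (Pi.[0])%:P%:P + (q^:P \Po F3) * F3.
  by rewrite {1}HPi rmorphD rmorphM /= map_polyC map_polyX comp_polyD comp_polyC comp_polyM comp_polyX.
have [c Hc] := Dr_Pi.
exists (c%:P%:P * u), (c%:P%:P * v), (- (c%:P%:P * (q^:P \Po F3))).
rewrite Hc !polyCM.
have -> : (Pi.[0])%:P%:P = Pi^:P \Po F3 - (q^:P \Po F3) * F3 by rewrite eH addrK.
rewrite Huv; ring.
Qed.

End Core.


Section Concrete.
Variable n : nat.
Local Notation Rr := {mpoly rat[n]}.

Definition rX (i : 'I_n) : Rr := 'X_i.

Lemma rX_inj : injective rX.
Proof.
move=> i j eij; have := congr1 (mcoeff U_(i)%MM) eij.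
rewrite /rX !mcoeffXU eqxx.
by case: (eqVneq j i) => [-> //|_] /eqP; rewrite oner_eq0.
Qed.

Lemma mesym_eval k :
  (mesym n Rr k).@[fun i => ('X_i : Rr)] = mesym n rat k.
Proof.
rewrite !mesymE raddf_sum /=; apply: eq_bigr => hh _.
by rewrite mevalX mpolyXE_id.
Qed.

Lemma vietaE (i : 'I_n) : tnth (vieta n) i = (-1) ^+ (n - i) *: mesym n rat (n - i).
Proof. by rewrite /vieta tnth_mktuple. Qed.

Lemma Viete_rat :
  FP rX = 'X^n + \sum_(i < n) (tnth (vieta n) i)%:P * 'X^i.
Proof.
have mon := FP_monic rX.
have sz := size_FP rX.
apply/polyP => j.
rewrite coefD coefXn coef_sum.
case: (ltngtP j n) => [ljn|lnj|->].
- rewrite add0r (bigD1 (Ordinal ljn)) //= coefCM coefXn eqxx mulr1 big1 ?addr0; last first.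
    by move=> k nk; rewrite coefCM coefXn; case: eqP => [ej|]; [move: nk; rewrite -val_eqE /= ej eqxx|rewrite mulr0].
  rewrite vietaE.
  have := mroots_coeff [tuple (rX i) | i < n] (inord (n - j)).
  rewrite inordK; last by rewrite ltnS leq_subr.
  rewrite subKn; last exact: ltnW.
  have -> : \prod_(c <- [tuple rX i | i < n]) ('X - c%:P) = FP rX.
    by rewrite big_tuple /FP; apply: eq_bigr => i _; rewrite tnth_mktuple.
  have -> : (mesym n Rr (n - j)).@[tnth [tuple rX i | i < n]] = mesym n rat (n - j).
    by rewrite -mesym_eval; apply: meval_eq => i; rewrite tnth_mktuple.
  move=> ->.
  by rewrite -mul_mpolyC rmorph_sign.
- rewrite add0r big1; [by apply: nth_default; rewrite sz | move=> k _].
  rewrite coefCM coefXn.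
  have -> : (j == k) = false.
    by apply/negbTE; rewrite neq_ltn (ltn_trans (ltn_ord k) lnj) orbT.
  by rewrite mulr0.
- rewrite big1; last first.
    move=> k _; rewrite coefCM coefXn.
    have -> : (n == k) = false by apply/negbTE; rewrite neq_ltn (ltn_ord k) orbT.
    by rewrite mulr0.
  by rewrite addr0; move/monicP: mon; rewrite /lead_coef sz.
Qed.

End Concrete.

Lemma mpoly_rmorph_eq k (S : comNzRingType) (f g : {rmorphism {mpoly rat[k]} -> S}) :
  (forall c, f c%:MP = g c%:MP) -> (forall i, f 'X_i = g 'X_i) -> f =1 g.
Proof.
move=> hC hX p; rewrite [p]mpolyE !rmorph_sum; apply: eq_bigr => m _.
rewrite -[p@_m *: _]mul_mpolyC !rmorphM hC; congr (_ * _).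
rewrite mpolyXE_id !rmorph_prod; apply: eq_bigr => i _.
by rewrite !rmorphXn hX.
Qed.

Section Transfer.
Variable n : nat.
Local Notation Rr := {mpoly rat[n]}.
Local Notation BA := {poly {poly {mpoly rat[n]}}}.
Local Notation Big := {mpoly rat[n.+2]}.

Definition h1 (i : 'I_n.+2) : BA :=
  if (insub (nat_of_ord i) : option 'I_n) is Some j then ('X_j)%:P%:P
  else if nat_of_ord i == n then ('X)%:P else 'X.

Definition cst : {rmorphism rat -> BA} := (polyC \o polyC \o @mpolyC n rat).

Definition Phi1 : {rmorphism Big -> BA} := mmap cst h1.

Definition cvieta : {rmorphism Rr -> Rr} := comp_mpoly (vieta n).

Definition Phi2 : {rmorphism BA -> {poly {poly Rr}}} := map_poly (map_poly cvieta).

Definition Psi1 : {rmorphism BA -> Big} :=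
  horner_eval (yvar n) \o map_poly (horner_eval (xvar n) \o map_poly (comp_mpoly (avars n))).

Lemma Phi1C c : Phi1 (c%:MP) = (c%:MP)%:P%:P.
Proof. by rewrite /Phi1 /= mmapC. Qed.

Lemma Phi1X i : Phi1 'X_i = h1 i.
Proof. by rewrite /Phi1 /= mmapX mmap1U. Qed.

Lemma Phi1_avar (i : 'I_n) : Phi1 (avar i) = ('X_i)%:P%:P.
Proof.
rewrite /avar Phi1X /h1 inordK; last by apply: (ltn_trans (ltn_ord i)); rewrite ltnS.
by rewrite insubT // => lt; congr (polyC (polyC 'X__)); apply: val_inj.
Qed.

Lemma Phi1_x : Phi1 (xvar n) = 'X%:P.
Proof.
rewrite /xvar Phi1X /h1 inordK // insubF ?ltnn //.
by rewrite eqxx.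
Qed.

Lemma Phi1_y : Phi1 (yvar n) = 'X.
Proof.
rewrite /yvar Phi1X /h1 inordK // insubF; last by rewrite ltnNge leqnSn.
by rewrite (gtn_eqF (ltnSn n)).
Qed.

Lemma Psi1C q : Psi1 (q%:P%:P) = q \mPo avars n.
Proof.
rewrite /Psi1 /= !horner_evalE map_polyC hornerC /= horner_evalE map_polyC hornerC.
by [].
Qed.

Lemma Psi1E P : Psi1 P =
  (map_poly (horner_eval (xvar n) \o map_poly (comp_mpoly (avars n))) P).[yvar n].
Proof. by []. Qed.

Lemma Psi1_y : Psi1 'X = yvar n.
Proof. by rewrite Psi1E map_polyX hornerX. Qed.

Lemma Psi1_x : Psi1 ('X%:P) = xvar n.
Proof. rewrite Psi1E map_polyC hornerC /= map_polyX; exact: hornerX. Qed.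

Lemma Psi1Phi1 p : Psi1 (Phi1 p) = p.
Proof.
have := @mpoly_rmorph_eq n.+2 Big (Psi1 \o Phi1) idfun.
apply => [c|i].
  by change (Psi1 (Phi1 c%:MP) = c%:MP); rewrite Phi1C Psi1C comp_mpolyC.
change (Psi1 (Phi1 'X_i) = 'X_i); rewrite Phi1X /h1.
case: insubP => [j ltj eij|].
  rewrite Psi1C comp_mpolyXU /avars -tnth_nth tnth_mktuple /avar.
  by congr 'X__; apply: val_inj; rewrite /= inordK ?eij //; apply: (ltn_trans ltj); rewrite ltnS.
rewrite -leqNgt => lni.
case: eqP => [ein|nin].
  by rewrite Psi1_x /xvar; congr 'X__; apply: val_inj; rewrite /= inordK.
rewrite Psi1_y /yvar; congr 'X__; apply: val_inj; rewrite /= inordK //.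
have lt : (n < i)%N.
  rewrite ltn_neqAle lni andbT; apply/negP => /eqP e; apply: nin; exact: esym.
by apply/eqP; rewrite eqn_leq lt -ltnS ltn_ord.
Qed.

End Transfer.


Lemma comp_mpoly_assoc k l m (t : {mpoly rat[k]}) (T : k.-tuple {mpoly rat[l]})
  (V : l.-tuple {mpoly rat[m]}) :
  (t \mPo T) \mPo V = t \mPo [tuple (tnth T i \mPo V) | i < k].
Proof.
have := @mpoly_rmorph_eq k {mpoly rat[m]} (comp_mpoly V \o comp_mpoly T)
   (comp_mpoly [tuple (tnth T i \mPo V) | i < k]).
apply => [c|i].
  by change ((c%:MP \mPo T) \mPo V = c%:MP \mPo [tuple (tnth T i \mPo V) | i < k]); rewrite !comp_mpolyC.
change (('X_i \mPo T) \mPo V = 'X_i \mPo [tuple (tnth T i \mPo V) | i < k]).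
by rewrite !comp_mpolyXU -!tnth_nth tnth_mktuple.
Qed.

Lemma sign2 (a : nat) : ((-1) ^+ a * (-1) ^+ a : rat) = 1.
Proof. by rewrite -exprMn mulrNN mulr1 expr1n. Qed.

Section Sym.
Variable n : nat.
Local Notation Rr := {mpoly rat[n]}.
Local Notation B := {poly {poly Rr}}.
Local Notation S := [tuple mesym n rat i.+1 | i < n].

Definition Tconv : n.-tuple Rr := [tuple ((-1) ^+ i.+1 *: 'X_(rev_ord i)) | i < n].
Definition Uconv : n.-tuple Rr := [tuple ((-1) ^+ (n - i) *: 'X_(rev_ord i)) | i < n].

Lemma Tconv_vieta (i : 'I_n) : tnth Tconv i \mPo vieta n = tnth S i.
Proof.
rewrite !tnth_mktuple comp_mpolyZ comp_mpolyXU -tnth_nth vietaE /=.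
by rewrite subKn // scalerA sign2 scale1r.
Qed.

Lemma Uconv_S (i : 'I_n) : tnth Uconv i \mPo S = tnth (vieta n) i.
Proof.
rewrite tnth_mktuple comp_mpolyZ comp_mpolyXU -tnth_nth tnth_mktuple vietaE /=.
by rewrite subnSK.
Qed.

Lemma Uconv_Tconv (i : 'I_n) : tnth Uconv i \mPo Tconv = 'X_i.
Proof.
rewrite tnth_mktuple comp_mpolyZ comp_mpolyXU -tnth_nth tnth_mktuple rev_ordK /=.
by rewrite scalerA subnSK // sign2 scale1r.
Qed.

Lemma cvieta_inj : injective (cvieta n).
Proof.
apply: raddf_inj => t; rewrite /cvieta /= => t0.
have e1 : t \mPo vieta n = (t \mPo Uconv) \mPo S.
  rewrite comp_mpoly_assoc; congr (t \mPo _); apply: eq_from_tnth => i.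
  by rewrite [RHS]tnth_mktuple Uconv_S.
have e2 : t \mPo Uconv = 0 by apply: msym_fundamental_un0; rewrite -e1.
have : (t \mPo Uconv) \mPo Tconv = t.
  rewrite comp_mpoly_assoc -[RHS]comp_mpoly_id; congr (t \mPo _); apply: eq_from_tnth => i.
  by rewrite [LHS]tnth_mktuple [RHS]tnth_mktuple Uconv_Tconv.
by rewrite e2 comp_mpoly0.
Qed.

End Sym.


Section Final.
Variable n : nat.
Local Notation Rr := {mpoly rat[n]}.
Local Notation B := {poly {poly Rr}}.
Local Notation BA := {poly {poly {mpoly rat[n]}}}.
Local Notation S := [tuple mesym n rat i.+1 | i < n].

Lemma vieta_sym (q : Rr) : cvieta n q \is symmetric.
Proof.
rewrite /cvieta /=; apply: mcomp_sym => i.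
by rewrite -tnth_nth vietaE; apply: rpredZ; apply: mesym_sym.
Qed.

Definition symB (s : 'S_n) : {rmorphism B -> B} := map_poly (map_poly (msym s)).

Lemma symB_Phi2 s Q : symB s (Phi2 n Q) = Phi2 n Q.
Proof.
rewrite /symB /Phi2 /= -map_poly_comp; apply: eq_map_poly => q /=.
rewrite -map_poly_comp; apply: eq_map_poly => c /=.
by move/issymP: (vieta_sym c) => ->.
Qed.

Lemma msymC s (c : rat) : msym s (c%:MP : Rr) = c%:MP.
Proof. by rewrite -alg_mpolyC msymZ msym1. Qed.

Definition Nn : nat := #|{perm 'I_n}|.
Definition kinv : rat := (Nn%:R)^-1.

Lemma kinvK : kinv * Nn%:R = 1.
Proof.
rewrite mulVf // pnatr_eq0 -lt0n; apply/card_gt0P; by exists 1%g.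
Qed.

Definition avg (c : B) : B := ((kinv%:MP)%:P%:P) * \sum_(s : 'S_n) symB s c.

Lemma avg_eq (X G1 G2 G3 c1 c2 c3 : B) :
  (forall s, symB s X = X) -> (forall s, symB s G1 = G1) ->
  (forall s, symB s G2 = G2) -> (forall s, symB s G3 = G3) ->
  X = c1 * G1 + c2 * G2 + c3 * G3 ->
  X = avg c1 * G1 + avg c2 * G2 + avg c3 * G3.
Proof.
move=> hX h1 h2 h3 e.
have eS : \sum_(s : 'S_n) X = \sum_(s : 'S_n) (symB s c1 * G1 + symB s c2 * G2 + symB s c3 * G3).
  apply: eq_bigr => s _.
  by rewrite -{1}(hX s) e !rmorphD !rmorphM h1 h2 h3.
rewrite !big_split /= -!mulr_suml sumr_const in eS.
have kN : (kinv%:MP)%:P%:P * (Nn%:R : B) = 1.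
  have := congr1 (cst n) kinvK; rewrite rmorphM rmorph_nat rmorph1; exact.
by rewrite /avg -!mulrA -!mulrDr -eS -mulr_natr mulrCA kN mulr1.
Qed.

Lemma avg_sym (c : B) a b : ((avg c)`_a)`_b \is symmetric.
Proof.
rewrite /avg coefCM coefCM coef_sum coef_sum.
apply/issymP => t; rewrite rmorphM; congr (_ * _); first exact: msymC.
rewrite rmorph_sum [RHS](reindex_inj (mulIg t)) /=; apply: eq_bigr => s _.
by rewrite /symB !coef_map /= msymMm.
Qed.

Definition lift (c : Rr) : Rr := symf c \mPo Tconv n.

Lemma lift0 : lift 0 = 0.
Proof. by rewrite /lift /symf symfnE0 comp_mpoly0. Qed.

Lemma liftK c : c \is symmetric -> cvieta n (lift c) = c.
Proof.
move=> sc; rewrite /cvieta /= /lift comp_mpoly_assoc.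
have -> : [tuple tnth (Tconv n) i \mPo vieta n | i < n] = S.
  by apply: eq_from_tnth => i; rewrite [LHS]tnth_mktuple Tconv_vieta.
by rewrite -symfP.
Qed.

Definition liftB (P : B) : BA := map_poly (map_poly lift) P.

Lemma Phi2_liftB (P : B) : (forall a b, (P`_a)`_b \is symmetric) -> Phi2 n (liftB P) = P.
Proof.
move=> hs; apply/polyP => a; rewrite /Phi2 /liftB /= coef_map coef_map_id0 ?map_poly0 //.
apply/polyP => b; rewrite coef_map coef_map_id0 ?lift0 //.
exact: liftK.
Qed.

Lemma Phi2_inj : injective (Phi2 n).
Proof.
rewrite /Phi2 /=; apply: map_inj_poly; last by rewrite map_poly0.
apply: map_inj_poly; last by rewrite rmorph0.
exact: cvieta_inj.
Qed.

End Final.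


Section Main.
Variable n : nat.
Local Notation Rr := {mpoly rat[n]}.
Local Notation B := {poly {poly Rr}}.

Lemma Phi2C q : Phi2 n (q%:P%:P) = (cvieta n q)%:P%:P.
Proof. rewrite /Phi2 /= map_polyC; congr _%:P; exact: map_polyC. Qed.

Lemma Phi2X : Phi2 n 'X = 'X.
Proof. by rewrite /Phi2 /= map_polyX. Qed.

Lemma Phi2x : Phi2 n ('X%:P) = 'X%:P.
Proof. rewrite /Phi2 /= map_polyC; congr _%:P; exact: map_polyX. Qed.

Lemma cvieta_X i : cvieta n 'X_i = tnth (vieta n) i.
Proof. by rewrite /cvieta /= comp_mpolyXU -tnth_nth. Qed.

Definition Phi (p : {mpoly rat[n.+2]}) : B := Phi2 n (Phi1 n p).

Lemma FBE (s : B) : FB (@rX n) s = s ^+ n + \sum_(i < n) (tnth (vieta n) i)%:P%:P * s ^+ i.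
Proof.
rewrite /FB /comp_poly Viete_rat.
rewrite !rmorphD !rmorph_sum !rmorphXn /= !map_polyX.
rewrite hornerD horner_sum hornerXn; congr (_ + _); apply: eq_bigr => i _.
by rewrite !rmorphM /= !map_polyC !map_polyXn hornerM hornerC hornerXn.
Qed.

Lemma Phi_fgen t : Phi (fgen t) = FB (@rX n) (Phi t).
Proof.
rewrite FBE /Phi /fgen.
rewrite (rmorphD (Phi1 n)) (rmorphXn (Phi1 n)) (rmorph_sum (Phi1 n)).
rewrite (rmorphD (Phi2 n)) (rmorphXn (Phi2 n)) (rmorph_sum (Phi2 n)).
congr (_ + _); apply: eq_bigr => i _.
rewrite (rmorphM (Phi1 n)) (rmorphXn (Phi1 n)) Phi1_avar.
by rewrite (rmorphM (Phi2 n)) (rmorphXn (Phi2 n)) Phi2C cvieta_X.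
Qed.

Lemma Phi_x : Phi (xvar n) = 'X%:P.
Proof. by rewrite /Phi Phi1_x Phi2x. Qed.
Lemma Phi_y : Phi (yvar n) = 'X.
Proof. by rewrite /Phi Phi1_y Phi2X. Qed.
Lemma Phi_scale (c : rat) p : Phi (c *: p) = ((c%:MP)%:P%:P) * Phi p.
Proof.
have e : c *: p = c%:MP * p by rewrite mul_mpolyC.
rewrite /Phi e.
have e1 : Phi1 n (c%:MP * p) = Phi1 n c%:MP * Phi1 n p by apply: rmorphM.
rewrite e1 Phi1C.
have e2 : Phi2 n ((c%:MP)%:P%:P * Phi1 n p) = Phi2 n ((c%:MP)%:P%:P) * Phi2 n (Phi1 n p) by apply: rmorphM.
have e3 : cvieta n (c%:MP) = c%:MP by apply: comp_mpolyC.
by rewrite e2 Phi2C e3.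
Qed.
End Main.


Section PhiLemmas.
Variable n : nat.
Lemma PhiM p q : Phi (p * q) = Phi p * Phi q :> {poly {poly {mpoly rat[n]}}}.
Proof.
have e1 : Phi1 n (p * q) = Phi1 n p * Phi1 n q by apply: rmorphM.
rewrite /Phi e1; apply: rmorphM.
Qed.
Lemma PhiD p q : Phi (p + q) = Phi p + Phi q :> {poly {poly {mpoly rat[n]}}}.
Proof.
have e1 : Phi1 n (p + q) = Phi1 n p + Phi1 n q by apply: rmorphD.
rewrite /Phi e1; apply: rmorphD.
Qed.
Lemma PhiB p q : Phi (p - q) = Phi p - Phi q :> {poly {poly {mpoly rat[n]}}}.
Proof.
have e1 : Phi1 n (p - q) = Phi1 n p - Phi1 n q by apply: rmorphB.
rewrite /Phi e1; apply: rmorphB.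
Qed.
Lemma PhiX p k : Phi (p ^+ k) = Phi p ^+ k :> {poly {poly {mpoly rat[n]}}}.
Proof.
have e1 : Phi1 n (p ^+ k) = Phi1 n p ^+ k by apply: rmorphXn.
rewrite /Phi e1; apply: rmorphXn.
Qed.
Lemma Phi_nat k : Phi (k%:R : {mpoly rat[n.+2]}) = k%:R :> {poly {poly {mpoly rat[n]}}}.
Proof.
have e1 : Phi1 n (k%:R) = k%:R by apply: rmorph_nat.
rewrite /Phi e1; apply: rmorph_nat.
Qed.
End PhiLemmas.


Lemma finish n (D2 : {mpoly rat[n]}) (L1 L2 L3 : {poly {poly {mpoly rat[n]}}}) (g1 g2 g3 : {mpoly rat[n.+2]}) :
  Phi2 n (D2%:P%:P) = Phi2 n L1 * Phi2 n (Phi1 n g1) + Phi2 n L2 * Phi2 n (Phi1 n g2) + Phi2 n L3 * Phi2 n (Phi1 n g3) ->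
  in_ideal3 g1 g2 g3 (D2 \mPo avars n).
Proof.
move=> Ha.
move: (Phi1 n g1) (Phi1 n g2) (Phi1 n g3) (Psi1Phi1 g1) (Psi1Phi1 g2) (Psi1Phi1 g3) Ha => G1 G2 G3 e1 e2 e3 Ha.
have Hb : (D2%:P%:P : {poly {poly {mpoly rat[n]}}}) = L1 * G1 + L2 * G2 + L3 * G3.
  apply: (@Phi2_inj n).
  by rewrite !rmorphD !rmorphM.
exists (Psi1 n L1), (Psi1 n L2), (Psi1 n L3).
by rewrite -Psi1C Hb !rmorphD !rmorphM e1 e2 e3.
Qed.

Unset Implicit Arguments.
Set Strict Implicit.

Theorem theorem4 (n : nat) (hn : (3 <= n)%N)
  (D2 : {mpoly rat[n]}) (f1 f3 : {mpoly rat[n.+2]}) :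
  is_D2 D2 -> is_f1 f1 -> is_f3 f3 ->
  in_ideal3 (fgen (xvar n)) f1 f3 (D2 \mPo avars n) /\
  in_coeff_ring (D2 \mPo avars n).
Proof.
move=> hD hf1 hf3; split; last by exists D2.
have n0 : (0 < n)%N by apply: leq_trans hn.
pose h : {mpoly rat[n]} := ((2%:R : rat)^-1)%:MP.
have h2 : h * 2%:R = 1.
  have e : (2%:R : {mpoly rat[n]}) = (2%:R : rat)%:MP by rewrite rmorph_nat.
  by rewrite e /h -rmorphM mulVf ?rmorph1 // pnatr_eq0.
have hF1 : ('X - 'X%:P) * Phi f1 = FB (@rX n) 'X - FB (@rX n) ('X%:P).
  have := congr1 (@Phi n) hf1.
  by rewrite PhiM PhiB PhiB !Phi_fgen Phi_x Phi_y.
have hF3 : ((h%:P%:P) * ('X - 'X%:P) ^+ 2) * Phi f3 =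
    FB (@rX n) 'X - 2%:R * FB (@rX n) ((h%:P%:P) * ('X%:P + 'X)) + FB (@rX n) ('X%:P).
  have := congr1 (@Phi n) hf3.
  by rewrite PhiM Phi_scale PhiX PhiB PhiD PhiB PhiM Phi_nat !Phi_fgen Phi_scale PhiD Phi_x Phi_y.
have [c1 [c2 [c3 Hc]]] := core_cert (@rX_inj n) n0 hF1 h2 hF3.
have eD : cvieta n D2 = Dr (@rX n) by apply: hD.
have eX : ((Dr (@rX n))%:P%:P : {poly {poly {mpoly rat[n]}}}) = Phi2 n (D2%:P%:P).
  by rewrite Phi2C eD.
have eG : ((FP (@rX n))%:P : {poly {poly {mpoly rat[n]}}}) = Phi2 n (Phi1 n (fgen (xvar n))).
  by rewrite -[Phi2 n _]/(Phi _) Phi_fgen Phi_x FBx.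
rewrite eX eG /Phi in Hc.
have Ha := avg_eq (fun s => symB_Phi2 s _) (fun s => symB_Phi2 s _)
  (fun s => symB_Phi2 s _) (fun s => symB_Phi2 s _) Hc.
rewrite -(Phi2_liftB (avg_sym c1)) -(Phi2_liftB (avg_sym c2)) -(Phi2_liftB (avg_sym c3)) in Ha.
exact: (finish Ha).
Qed.
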